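(* For every formula $\varphi$ of $\mathcal L$ there exist a finite set $Q_\varphi$ of new predicate symbols (not in $\mathcal L$) and a finite order clausal theory $S_\varphi$ over $\mathcal L\cup Q_\varphi$ such that: (a) $|Q_\varphi|\le 2\cdot|\varphi|$; (b) either $Q_\varphi=\emptyset$ and $S_\varphi=\{\square\}$, or $Q_\varphi=S_\varphi=\emptyset$, or $Q_\varphi\neq\emptyset$ and $\square\notin S_\varphi\neq\emptyset$; (c) for every interpretation $\mathfrak A$ for $\mathcal L$: $\mathfrak A\models\varphi$ if and only if there exists an expansion $\mathfrak A'$ of $\mathfrak A$ to $\mathcal L\cup Q_\varphi$ with $\mathfrak A'\models S_\varphi$; (d) $|S_\varphi|\le c\cdot|\varphi|^2$ for an absolute constant $c$ (independent of $\mathcal L$ and $\varphi$); (e) if $S_\varphi\notin\{\emptyset,\{\square\}\}$, then $Q_\varphi\ne\emptyset$ and every clause $C\in S_\varphi$ contains at least one predicate symbol from $Q_\varphi$; (f) $\mathrm{tcons}(S_\varphi)\setminus\{\bar0,\bar1\}\subseteq\mathrm{tcons}(\varphi)\setminus\{\bar0,\bar1\}$.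
   Context: First-order Gödel logic with truth constants. Fix a countable first-order language $\mathcal L$ and a countable set $C_{\mathcal L}$ with $\{0,1\}\subseteq C_{\mathcal L}\subseteq[0,1]$; for each $c\in C_{\mathcal L}$ there is a truth constant $\bar c$. Formulae are built from atoms and truth constants using $\neg$, $\Delta$, $\wedge,\vee,\rightarrow,\leftrightarrow$, $\eqcirc$ (equality), $\prec$ (strict order), $\forall,\exists$. An interpretation has a nonempty universe, ordinary functions and $[0,1]$-valued relations. Truth values under an assignment $e$: atoms by the relations; $\|\bar c\|=c$; $\|\neg\varphi\|=1$ if $\|\varphi\|=0$ else $0$; $\|\Delta\varphi\|=1$ if $\|\varphi\|=1$ else $0$; $\wedge=\min$, $\vee=\max$; $\|\varphi\to\psi\|=1$ if $\|\varphi\|\le\|\psi\|$ else $\|\psi\|$; $\|\varphi\leftrightarrow\psi\|=\min(\|\varphi\to\psi\|,\|\psi\to\varphi\|)$; $\|\varphi\eqcirc\psi\|=1$ if equal else $0$; $\|\varphi\prec\psi\|=1$ if $\|\varphi\|<\|\psi\|$ else $0$; $\forall=\inf$, $\exists=\sup$. $\mathcal I\models\varphi$ iff $\|\varphi\|^{\mathcal I}_e=1$ for all assignments $e$. For languages $\mathcal L_1\subseteq\mathcal L_2$, an interpretation for $\mathcal L_2$ is an expansion of one for $\mathcal L_1$ if they have the same universe and agree on the symbols of $\mathcal L_1$. Size: $|x|=1$ for a variable, $|f(t_1,\dots,t_n)|=|p(t_1,\dots,t_n)|=1+\sum|t_i|$; $|\bar c|=1$; $|\neg\varphi|=|\Delta\varphi|=1+|\varphi|$;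 $|\varphi\diamond\psi|=1+|\varphi|+|\psi|$; $|Qx\,\varphi|=2+|\varphi|$. $\mathrm{tcons}(\cdot)$ is the set of truth constants occurring. Order clauses: a quantified atom is $Qx\,p(t_0,\dots,t_n)$ with $Q\in\{\forall,\exists\}$, $x$ occurring in $p(t_0,\dots,t_n)$, and for each $i$ either $t_i=x$ or $x$ does not occur in $t_i$. An order literal is $\varepsilon_1\diamond\varepsilon_2$, each $\varepsilon_i$ an atom, truth constant or quantified atom, $\diamond\in\{\eqcirc,\prec\}$. An order clause is a finite set of order literals ($\square$ = empty clause); $\mathcal I\models_e C$ iff some literal of $C$ has value $1$ under $e$; $\mathcal I\models C$ iff for all $e$; $\mathcal I\models S$ iff $\mathcal I\models C$ for all $C\in S$. $|C|=\sum_{l\in C}|l|$, $|S|=\sum_{C\in S}|C|$. *)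

(* Defs.v *)
From HB Require Import structures.
From mathcomp Require Import all_boot all_order all_algebra.
From mathcomp Require Import boolp classical_sets cardinality reals.
From mathcomp Require Import Rstruct.
From Stdlib Require Import Rdefinitions.

Set Implicit Arguments.
Unset Strict Implicit.
Unset Printing Implicit Defensive.

Import Order.TTheory GRing.Theory Num.Theory.
Local Open Scope classical_set_scope.
Local Open Scope ring_scope.

Notation R := Rdefinitions.R.

Record language := Language {
  fsym : countType;
  psym : countType;
  farity : fsym -> nat;
  parity : psym -> nat;
  tcset : set R;
  tc0 : tcset 0;
  tc1 : tcset 1;
  tc_unit : forall c, tcset c -> 0 <= c <= 1;
  tc_count : countable tcset
}.

(* L ∪ Q : extension of L by fresh predicate symbols, one for each entry of
   Q (the entry being its arity).  The new symbols are [inr i], i < size Q. *)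
Definition ext_parity (L : language) (Q : seq nat)
  (p : (psym L + 'I_(size Q))%type) : nat :=
  match p with inl p => parity p | inr i => nth 0%N Q i end.

Definition ext (L : language) (Q : seq nat) : language :=
  @Language (fsym L) (psym L + 'I_(size Q))%type (@farity L) (@ext_parity L Q)
    (tcset L) (tc0 L) (tc1 L) (@tc_unit L) (tc_count L).

Inductive term (F : Type) :=
| Var : nat -> term F
| App : F -> seq (term F) -> term F.
Arguments Var {F}.

Inductive formula (L : language) :=
| FAtom : psym L -> seq (term (fsym L)) -> formula L
| FConst : R -> formula L
| FNeg : formula L -> formula L
| FDelta : formula L -> formula L
| FAnd : formula L -> formula L -> formula L
| FOr : formula L -> formula L -> formula L
| FImp : formula L -> formula L -> formula L
| FEquiv : formula L -> formula L -> formula L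
| FEqc : formula L -> formula L -> formula L
| FPrec : formula L -> formula L -> formula L
| FAll : nat -> formula L -> formula L
| FEx : nat -> formula L -> formula L.

Fixpoint wf_term (L : language) (t : term (fsym L)) : bool :=
  match t with
  | Var _ => true
  | App f ts => (size ts == farity f) && all (@wf_term L) ts
  end.

Fixpoint wf_formula (L : language) (phi : formula L) : Prop :=
  match phi with
  | FAtom p ts => size ts = parity p /\ all (@wf_term L) ts
  | FConst c => tcset L c
  | FNeg a | FDelta a | FAll _ a | FEx _ a => wf_formula a
  | FAnd a b | FOr a b | FImp a b | FEquiv a b | FEqc a b | FPrec a b =>
      wf_formula a /\ wf_formula b
  end.

Fixpoint tsize (F : Type) (t : term F) : nat :=
  match t with
  | Var _ => 1
  | App _ ts => 1 + sumn (map (@tsize F) ts)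
  end%N.

Fixpoint fsize (L : language) (phi : formula L) : nat :=
  match phi with
  | FAtom _ ts => 1 + sumn (map (@tsize _) ts)
  | FConst _ => 1
  | FNeg a | FDelta a => 1 + fsize a
  | FAnd a b | FOr a b | FImp a b | FEquiv a b | FEqc a b | FPrec a b =>
      1 + fsize a + fsize b
  | FAll _ a | FEx _ a => 2 + fsize a
  end%N.

Fixpoint fconsts (L : language) (phi : formula L) : seq R :=
  match phi with
  | FAtom _ _ => [::]
  | FConst c => [:: c]
  | FNeg a | FDelta a | FAll _ a | FEx _ a => fconsts a
  | FAnd a b | FOr a b | FImp a b | FEquiv a b | FEqc a b | FPrec a b =>
      fconsts a ++ fconsts b
  end.

Fixpoint occurs (F : Type) (x : nat) (t : term F) : bool :=
  match t with
  | Var y => y == x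
  | App _ ts => has (@occurs F x) ts
  end.

Definition is_var (F : Type) (x : nat) (t : term F) : bool :=
  if t is Var y then y == x else false.

(* quantifier: true = ∀, false = ∃ *)
Inductive oexpr (L : language) :=
| OAtom : psym L -> seq (term (fsym L)) -> oexpr L
| OConst : R -> oexpr L
| OQAtom : bool -> nat -> psym L -> seq (term (fsym L)) -> oexpr L.

(* order literal  e1 ◇ e2, ◇ = ≗ (olprec = false) or ≺ (olprec = true) *)
Record olit (L : language) := OLit { ollhs : oexpr L; olprec : bool; olrhs : oexpr L }.

Definition oclause (L : language) := seq (olit L).
Definition otheory (L : language) := seq (oclause L).

Definition wf_oexpr (L : language) (e : oexpr L) : Prop :=
  match e with
  | OAtom p ts => size ts = parity p /\ all (@wf_term L) ts
  | OConst c => tcset L c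
  | OQAtom _ x p ts =>
      [/\ size ts = parity p, all (@wf_term L) ts,
          has (occurs x) ts & all (fun t => is_var x t || ~~ occurs x t) ts]
  end.

Definition wf_olit (L : language) (l : olit L) : Prop :=
  wf_oexpr (ollhs l) /\ wf_oexpr (olrhs l).

Definition wf_otheory (L : language) (S : otheory L) : Prop :=
  forall C, List.In C S -> forall l, List.In l C -> wf_olit l.

Definition oesize (L : language) (e : oexpr L) : nat :=
  match e with
  | OAtom _ ts => 1 + sumn (map (@tsize _) ts)
  | OConst _ => 1
  | OQAtom _ _ _ ts => 2 + (1 + sumn (map (@tsize _) ts))
  end%N.

Definition olsize (L : language) (l : olit L) : nat :=
  (1 + oesize (ollhs l) + oesize (olrhs l))%N.

Definition ocsize (L : language) (C : oclause L) : nat := sumn (map (@olsize L) C).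
Definition otsize (L : language) (S : otheory L) : nat := sumn (map (@ocsize L) S).

Definition oeconsts (L : language) (e : oexpr L) : seq R :=
  if e is OConst c then [:: c] else [::].
Definition olconsts (L : language) (l : olit L) : seq R :=
  oeconsts (ollhs l) ++ oeconsts (olrhs l).
Definition otconsts (L : language) (S : otheory L) : seq R :=
  flatten (map (fun C => flatten (map (@olconsts L) C)) S).

Definition oepred (L : language) (e : oexpr L) : option (psym L) :=
  match e with
  | OAtom p _ => Some p
  | OConst _ => None
  | OQAtom _ _ p _ => Some p
  end.

Definition has_new_pred (L : language) (Q : seq nat) (C : oclause (ext L Q)) : Prop :=
  exists l, List.In l C /\
    ((exists i, oepred (ollhs l) = Some (inr i)) \/
     (exists i, oepred (olrhs l) = Some (inr i))).

Record interp (L : language) (U : Type) := Interp {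
  ifun : fsym L -> seq U -> U;
  irel : psym L -> seq U -> R;
  irel_unit : forall p us, 0 <= irel p us <= 1
}.

Definition upd (U : Type) (e : nat -> U) (x : nat) (u : U) : nat -> U :=
  fun y => if y == x then u else e y.

Section Eval.
Variables (L : language) (U : Type) (A : interp L U).

Fixpoint teval (e : nat -> U) (t : term (fsym L)) : U :=
  match t with
  | Var x => e x
  | App f ts => ifun A f (map (teval e) ts)
  end.

Definition impl_val (a b : R) : R := if a <= b then 1 else b.

Fixpoint feval (phi : formula L) (e : nat -> U) : R :=
  match phi with
  | FAtom p ts => irel A p (map (teval e) ts)
  | FConst c => c
  | FNeg a => if feval a e == 0 then 1 else 0
  | FDelta a => if feval a e == 1 then 1 else 0
  | FAnd a b => Num.min (feval a e) (feval b e)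
  | FOr a b => Num.max (feval a e) (feval b e)
  | FImp a b => impl_val (feval a e) (feval b e)
  | FEquiv a b => Num.min (impl_val (feval a e) (feval b e))
                          (impl_val (feval b e) (feval a e))
  | FEqc a b => if feval a e == feval b e then 1 else 0
  | FPrec a b => if feval a e < feval b e then 1 else 0
  | FAll x a => inf [set r | exists u : U, r = feval a (upd e x u)]
  | FEx x a => sup [set r | exists u : U, r = feval a (upd e x u)]
  end.

Definition fmodels (phi : formula L) : Prop := forall e, feval phi e = 1.

Definition oeval (o : oexpr L) (e : nat -> U) : R :=
  match o with
  | OAtom p ts => irel A p (map (teval e) ts)
  | OConst c => c
  | OQAtom q x p ts =>
      let vals := [set r | exists u : U, r = irel A p (map (teval (upd e x u)) ts)] in
      if q then inf vals else sup vals
  end.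

Definition olit_holds (e : nat -> U) (l : olit L) : bool :=
  if olprec l then oeval (ollhs l) e < oeval (olrhs l) e
  else oeval (ollhs l) e == oeval (olrhs l) e.

Definition cmodels (C : oclause L) : Prop := forall e, has (olit_holds e) C.

Definition tmodels (S : otheory L) : Prop := forall C, List.In C S -> cmodels C.
End Eval.

(* A' (for L ∪ Q) is an expansion of A (for L): same universe U (by typing),
   same interpretation of all symbols of L. *)
Definition expansion (L : language) (Q : seq nat) (U : Type)
  (A : interp L U) (A' : interp (ext L Q) U) : Prop :=
  (forall (f : fsym L) us, ifun A' f us = ifun A f us) /\
  (forall (p : psym L) us, irel A' (inl p) us = irel A p us).

(* Main.v *)
Require Import Defs.
From mathcomp Require Import zify.
From HB Require Import structures.
From mathcomp Require Import all_boot all_order all_algebra.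
From mathcomp Require Import boolp classical_sets cardinality reals Rstruct.


Import Defs.
Set Implicit Arguments.
Unset Strict Implicit.
Unset Printing Implicit Defensive.
Import Order.TTheory GRing.Theory Num.Theory.
Local Open Scope classical_set_scope.
Local Open Scope ring_scope.

Definition term_ind2 (F : Type) (P : term F -> Prop)
  (HV : forall n, P (Var n))
  (HA : forall f ts, List.Forall P ts -> P (App f ts)) : forall t, P t :=
  fix go t := match t return P t with
  | Var n => HV n
  | App f ts => HA f ts ((fix gl (ts : seq (term F)) : List.Forall P ts :=
       match ts return List.Forall P ts with
       | nil => List.Forall_nil P
       | cons t ts' => @List.Forall_cons _ P t ts' (go t) (gl ts')
       end) ts)
  end.

Lemma map_Forall (A B : Type) (f g : A -> B) (s : seq A) :
  List.Forall (fun x => f x = g x) s -> map f s = map g s.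
Proof. by elim=> //= x s' fx _ ->; rewrite fx. Qed.

Fixpoint tvars (F : Type) (t : term F) : seq nat :=
  match t with
  | Var x => [:: x]
  | App _ ts => flatten (map (@tvars F) ts)
  end.

Lemma tvars_size (F : Type) (t : term F) : (size (tvars t) <= tsize t)%N.
Proof.
elim/term_ind2: t => //= f ts H.
elim: H => //= t ts' Ht _ IH; rewrite size_cat; lia.
Qed.

Lemma occurs_tvars (F : Type) x (t : term F) : occurs x t -> x \in tvars t.
Proof.
elim/term_ind2: t => /=; first by move=> n /eqP ->; rewrite inE.
move=> f ts H; elim: H => //= t ts' Ht _ IH /orP[/Ht|/IH]; rewrite mem_cat => -> //.
by rewrite orbT.
Qed.

Section Sem.
Variables (L : language) (U : Type).

Lemma teval_agree (A : interp L U) (e e' : nat -> U) t :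
  (forall v, v \in tvars t -> e v = e' v) -> teval A e t = teval A e' t.
Proof.
elim/term_ind2: t => /=; first by move=> n ->; rewrite ?inE.
move=> f ts H Hag; congr (ifun A f _); apply: map_Forall.
elim: H Hag => //= t ts' Ht _ IH Hag; constructor.
  by apply: Ht => v vt; apply: Hag; rewrite mem_cat vt.
by apply: IH => v vt; apply: Hag; rewrite mem_cat vt orbT.
Qed.

Lemma teval_exp (Q : seq nat) (A : interp L U) (A' : interp (ext L Q) U) e t :
  (forall (f : fsym L) us, ifun A' f us = ifun A f us) ->
  teval A' e t = teval A e t.
Proof.
move=> Hf; elim/term_ind2: t => //= f ts H; rewrite Hf; congr (ifun A f _).
by apply: map_Forall.
Qed.

End Sem.

Fixpoint fvars (L : language) (phi : formula L) : seq nat :=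
  match phi with
  | FAtom _ ts => flatten (map (@tvars _) ts)
  | FConst _ => [::]
  | FNeg a | FDelta a => fvars a
  | FAll x a | FEx x a => x :: fvars a
  | FAnd a b | FOr a b | FImp a b | FEquiv a b | FEqc a b | FPrec a b =>
      fvars a ++ fvars b
  end.

Lemma sumn_tvars (F : Type) (ts : seq (term F)) :
  (size (flatten (map (@tvars F) ts)) <= sumn (map (@tsize F) ts))%N.
Proof. elim: ts => //= t ts IH; rewrite size_cat; have := tvars_size t; lia. Qed.

Lemma fvars_size (L : language) (phi : formula L) : (size (fvars phi) <= fsize phi)%N.
Proof.
elim: phi => //=; try (move=> *; rewrite ?size_cat; lia).
by move=> _ ts; have := sumn_tvars ts; lia.
Qed.

Lemma fsize_gt0 (L : language) (phi : formula L) : (0 < fsize phi)%N.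
Proof. by case: phi. Qed.

Section Sem2.
Variables (L : language) (U : Type) (A : interp L U).

Lemma feval_agree (phi : formula L) (e e' : nat -> U) :
  (forall v, v \in fvars phi -> e v = e' v) -> feval A phi e = feval A phi e'.
Proof.
elim: phi e e' => /=.
- move=> p ts e e' H; congr (irel A p _); elim: ts H => //= t ts IH H.
  rewrite IH; last by move=> v vi; apply: H; rewrite mem_cat vi orbT.
  by rewrite (@teval_agree _ _ A e e') // => v vi; apply: H; rewrite mem_cat vi.
- by [].
- by move=> a IH e e' H; rewrite (IH e e').
- by move=> a IH e e' H; rewrite (IH e e').
- move=> a IHa b IHb e e' H; rewrite (IHa e e') ?(IHb e e') // => v vi;
    by apply: H; rewrite mem_cat vi ?orbT.
- move=> a IHa b IHb e e' H; rewrite (IHa e e') ?(IHb e e') // => v vi;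
    by apply: H; rewrite mem_cat vi ?orbT.
- move=> a IHa b IHb e e' H; rewrite (IHa e e') ?(IHb e e') // => v vi;
    by apply: H; rewrite mem_cat vi ?orbT.
- move=> a IHa b IHb e e' H; rewrite (IHa e e') ?(IHb e e') // => v vi;
    by apply: H; rewrite mem_cat vi ?orbT.
- move=> a IHa b IHb e e' H; rewrite (IHa e e') ?(IHb e e') // => v vi;
    by apply: H; rewrite mem_cat vi ?orbT.
- move=> a IHa b IHb e e' H; rewrite (IHa e e') ?(IHb e e') // => v vi;
    by apply: H; rewrite mem_cat vi ?orbT.
- move=> x a IH e e' H; congr (inf _); apply/funext => r; apply/propext.
  split=> -[u ->]; exists u; apply: IH => v vi; rewrite /upd; case: eqP => // _;
  by rewrite H // inE vi orbT.
- move=> x a IH e e' H; congr (sup _); apply/funext => r; apply/propext.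
  split=> -[u ->]; exists u; apply: IH => v vi; rewrite /upd; case: eqP => // _;
  by rewrite H // inE vi orbT.
Qed.

Lemma inf01 (E : set R) : (exists x, E x) -> (forall x, E x -> 0 <= x <= 1) ->
  0 <= inf E <= 1.
Proof.
move=> [x Ex] H; apply/andP; split.
  by apply: lb_le_inf; [exists x | move=> y /H /andP[]].
have hl : has_lbound E by exists 0 => y /H /andP[].
have := ge_inf hl Ex; have := H x Ex; case/andP=> _ h1 h2; exact: le_trans h2 h1.
Qed.

Lemma sup01 (E : set R) : (exists x, E x) -> (forall x, E x -> 0 <= x <= 1) ->
  0 <= sup E <= 1.
Proof.
move=> [x Ex] H; apply/andP; split; last first.
  by apply: ge_sup; [exists x | move=> y /H /andP[]].
have hl : has_ubound E by exists 1 => y /H /andP[].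
have := ub_le_sup hl Ex; have := H x Ex; case/andP=> h1 _ h2; exact: le_trans h1 h2.
Qed.

Lemma impl01 a b : 0 <= b <= 1 -> 0 <= impl_val a b <= 1.
Proof. by rewrite /impl_val; case: ifP => // _ _; rewrite ler01 lexx. Qed.

Lemma feval01 (u0 : U) (phi : formula L) e : wf_formula phi -> 0 <= feval A phi e <= 1.
Proof.
elim: phi e => /=.
- by move=> p ts e _; apply: irel_unit.
- by move=> c e /tc_unit.
- by move=> a IH e _; case: ifP; rewrite ?ler01 ?lexx.
- by move=> a IH e _; case: ifP; rewrite ?ler01 ?lexx.
- move=> a IHa b IHb e [wa wb]; have := IHa e wa; have := IHb e wb.
  by rewrite /Num.min; case: ifP.
- move=> a IHa b IHb e [wa wb]; have := IHa e wa; have := IHb e wb.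
  by rewrite /Num.max; case: ifP.
- move=> a IHa b IHb e [wa wb]; exact: impl01 (IHb e wb).
- move=> a IHa b IHb e [wa wb]; rewrite /Num.min; case: ifP => _.
    exact: impl01 (IHb e wb).
  exact: impl01 (IHa e wa).
- by move=> a IHa b IHb e _; case: ifP; rewrite ?ler01 ?lexx.
- by move=> a IHa b IHb e _; case: ifP; rewrite ?ler01 ?lexx.
- move=> x a IH e wa; apply: inf01; first by exists (feval A a (upd e x u0)), u0.
  by move=> r [u ->]; apply: IH.
- move=> x a IH e wa; apply: sup01; first by exists (feval A a (upd e x u0)), u0.
  by move=> r [u ->]; apply: IH.
Qed.

End Sem2.

Section RealLemmas.
Implicit Types q x y : R.

Lemma and_ok q x y : ((q == y) || ((x < y) || ((x == y) || false))) &&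
  ((q == x) || ((y < x) || false)) = (q == Num.min x y).
Proof. by case: ltgtP => [h|h|h]; [| |subst]; rewrite ?orbT ?orbF ?andbT //= eqxx orbT. Qed.

Lemma or_ok q x y : ((q == y) || ((y < x) || false)) &&
  ((q == x) || ((x < y) || ((x == y) || false))) = (q == Num.max x y).
Proof. by case: ltgtP => [h|h|h]; [| |subst]; rewrite ?orbT ?orbF ?andbT //= eqxx orbT. Qed.

Lemma imp_ok q x y : ((q == 1) || ((y < x) || false)) &&
  ((q == y) || ((x < y) || ((x == y) || false))) = (q == impl_val x y).
Proof. rewrite /impl_val; by case: ltgtP => [h|h|h]; [| |subst]; rewrite ?orbT ?orbF ?andbT //= eqxx orbT. Qed.

Lemma equiv_ok q x y : x <= 1 -> y <= 1 ->
  [&& (q == 1) || ((x < y) || ((y < x) || false)),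
      (q == x) || ((x == y) || ((y < x) || false)) &
      (q == y) || ((x == y) || ((x < y) || false))]
  = (q == Num.min (impl_val x y) (impl_val y x)).
Proof.
rewrite /impl_val => x1 y1; case: ltgtP => [h|h|h]; [| |subst]; rewrite ?orbT ?orbF ?andbT ?eqxx //=.
- by rewrite min_r.
- by rewrite min_l.
- by rewrite minxx.
Qed.

Lemma eqc_ok q x y : ((q == 0) || ((x == y) || false)) &&
  ((q == 1) || ((x < y) || ((y < x) || false))) = (q == if x == y then 1 else 0).
Proof. by case: ltgtP => [h|h|h]; [| |subst]; rewrite ?orbT ?orbF ?andbT ?eqxx //=. Qed.

Lemma prec_ok q x y : ((q == 0) || ((x < y) || false)) &&
  ((q == 1) || ((y < x) || ((x == y) || false))) = (q == if x < y then 1 else 0).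
Proof. by case: ltgtP => [h|h|h]; [| |subst]; rewrite ?orbT ?orbF ?andbT ?eqxx ?ltxx //=. Qed.

Lemma neg_ok q x : ((q == 0) || ((x == 0) || false)) &&
  ((q == 1) || ((0 < x) || ((x < 0) || false))) = (q == if x == 0 then 1 else 0).
Proof. by case: (ltgtP x 0) => [h|h|h]; [| |subst]; rewrite ?orbT ?orbF ?andbT ?eqxx ?ltxx //=. Qed.

Lemma delta_ok q x : ((q == 0) || ((x == 1) || false)) &&
  ((q == 1) || ((x < 1) || ((1 < x) || false))) = (q == if x == 1 then 1 else 0).
Proof. by case: (ltgtP x 1) => [h|h|h]; [| |subst]; rewrite ?orbT ?orbF ?andbT ?eqxx ?ltxx //=. Qed.

End RealLemmas.

Section Trans.
Variables (L : language) (n : nat) (V : seq nat).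

Definition Qs := nseq n.+1 (size V).
Definition LQ := ext L Qs.
Definition pidx (i : nat) : 'I_(size Qs) := @inord (size (nseq n (size V))) i.
Definition Qa (i : nat) : oexpr LQ := @OAtom LQ (inr (pidx i)) (map Var V).
Definition eqc (a b : oexpr LQ) := OLit a false b.
Definition prc (a b : oexpr LQ) := OLit a true b.
Definition c0 : oexpr LQ := OConst _ 0.
Definition c1 : oexpr LQ := OConst _ 1.

Fixpoint trans (phi : formula L) (s : nat) : otheory LQ :=
  let q := Qa s in let x := Qa s.+1 in
  match phi with
  | FAtom p ts => [:: [:: eqc q (@OAtom LQ (inl p) ts)]]
  | FConst c => [:: [:: eqc q (OConst _ c)]]
  | FNeg a => [:: [:: eqc q c0; eqc x c0]; [:: eqc q c1; prc c0 x; prc x c0]] ++ trans a s.+1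
  | FDelta a => [:: [:: eqc q c0; eqc x c1]; [:: eqc q c1; prc x c1; prc c1 x]] ++ trans a s.+1
  | FAnd a b => let y := Qa (s.+1 + fsize a) in
      [:: [:: eqc q y; prc x y; eqc x y]; [:: eqc q x; prc y x]]
      ++ trans a s.+1 ++ trans b (s.+1 + fsize a)
  | FOr a b => let y := Qa (s.+1 + fsize a) in
      [:: [:: eqc q y; prc y x]; [:: eqc q x; prc x y; eqc x y]]
      ++ trans a s.+1 ++ trans b (s.+1 + fsize a)
  | FImp a b => let y := Qa (s.+1 + fsize a) in
      [:: [:: eqc q c1; prc y x]; [:: eqc q y; prc x y; eqc x y]]
      ++ trans a s.+1 ++ trans b (s.+1 + fsize a)
  | FEquiv a b => let y := Qa (s.+1 + fsize a) in
      [:: [:: eqc q c1; prc x y; prc y x]; [:: eqc q x; eqc x y; prc y x];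
          [:: eqc q y; eqc x y; prc x y]]
      ++ trans a s.+1 ++ trans b (s.+1 + fsize a)
  | FEqc a b => let y := Qa (s.+1 + fsize a) in
      [:: [:: eqc q c0; eqc x y]; [:: eqc q c1; prc x y; prc y x]]
      ++ trans a s.+1 ++ trans b (s.+1 + fsize a)
  | FPrec a b => let y := Qa (s.+1 + fsize a) in
      [:: [:: eqc q c0; prc x y]; [:: eqc q c1; prc y x; eqc x y]]
      ++ trans a s.+1 ++ trans b (s.+1 + fsize a)
  | FAll v a => [:: [:: eqc q (@OQAtom LQ true v (inr (pidx s.+1)) (map Var V))]] ++ trans a s.+1
  | FEx v a => [:: [:: eqc q (@OQAtom LQ false v (inr (pidx s.+1)) (map Var V))]] ++ trans a s.+1
  end.

Definition theory (phi : formula L) : otheory LQ := [:: eqc (Qa 0) c1] :: trans phi 0.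

End Trans.

Lemma tmodels_cons (L : language) (U : Type) (A : interp L U) C S :
  tmodels A (C :: S) <-> cmodels A C /\ tmodels A S.
Proof.
split=> [H|[HC HS] C' /= [<-|]] //; last exact: HS.
by split=> [|C' HC']; apply: H; [left|right].
Qed.

Lemma tmodels_cat (L : language) (U : Type) (A : interp L U) S1 S2 :
  tmodels A (S1 ++ S2) <-> tmodels A S1 /\ tmodels A S2.
Proof.
split=> [H|[H1 H2] C HC].
  by split=> C HC; apply: H; apply: List.in_or_app; [left|right].
by case: (List.in_app_or _ _ _ HC); [apply: H1|apply: H2].
Qed.

Section Sound.
Variables (L : language) (n : nat) (V : seq nat) (U : Type) (A : interp L U)
  (A' : interp (LQ L n V) U).
Hypothesis Hexp : expansion A A'.

Definition qv (i : nat) (e : nat -> U) : R := irel A' (inr (pidx n V i)) (map e V).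

Lemma mapVar e : map (teval A' e) (map Var V) = map e V.
Proof. by rewrite -map_comp. Qed.

Lemma qv01 i e : 0 <= qv i e <= 1.
Proof. exact: irel_unit. Qed.
Lemma qv_le1 i e : qv i e <= 1.
Proof. by case/andP: (qv01 i e). Qed.

Lemma holds_eqc e a b : olit_holds A' e (eqc a b) = (oeval A' a e == oeval A' b e).
Proof. by []. Qed.
Lemma holds_prc e a b : olit_holds A' e (prc a b) = (oeval A' a e < oeval A' b e).
Proof. by []. Qed.
Lemma oeval_Qa e i : oeval A' (Qa L n V i) e = qv i e.
Proof. by rewrite /= mapVar. Qed.
Lemma oeval_c0 e : oeval A' (c0 L n V) e = 0. Proof. by []. Qed.
Lemma oeval_c1 e : oeval A' (c1 L n V) e = 1. Proof. by []. Qed.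
Definition simpE := (holds_eqc, holds_prc, oeval_Qa, oeval_c0, oeval_c1).

Ltac unpack_bin H1 H2 Ha Hb :=
  move/tmodels_cons=> [H1 /tmodels_cons [H2 /tmodels_cat [Ha Hb]]].

Lemma sound (phi : formula L) s : tmodels A' (trans n V phi s) ->
  forall e, qv s e = feval A phi e.
Proof.
elim: phi s => /=.
- move=> p ts s H e; move: (H _ (or_introl erefl) e) => /=; rewrite !simpE orbF => /eqP ->.
  rewrite /= Hexp.2; congr (irel A p _); elim: ts {H} => //= t ts ->.
  by rewrite (teval_exp _ _ Hexp.1).
- by move=> c s H e; move: (H _ (or_introl erefl) e) => /=; rewrite !simpE orbF => /eqP ->.
- move=> a IHa s /tmodels_cons [H1 /tmodels_cons [H2 Ha]] e.
  move: (H1 e) (H2 e); rewrite /= !simpE => h1 h2.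
  have := neg_ok (qv s e) (qv s.+1 e); rewrite h1 h2 => /esym/eqP ->.
  by rewrite (IHa _ Ha).
- move=> a IHa s /tmodels_cons [H1 /tmodels_cons [H2 Ha]] e.
  move: (H1 e) (H2 e); rewrite /= !simpE => h1 h2.
  have := delta_ok (qv s e) (qv s.+1 e); rewrite h1 h2 => /esym/eqP ->.
  by rewrite (IHa _ Ha).
- move=> a IHa b IHb s; unpack_bin H1 H2 Ha Hb => e.
  move: (H1 e) (H2 e); rewrite /= !simpE => h1 h2.
  have := and_ok (qv s e) (qv s.+1 e) (qv (s.+1 + fsize a) e); rewrite h1 h2 => /esym/eqP ->.
  by rewrite (IHa _ Ha) (IHb _ Hb).
- move=> a IHa b IHb s; unpack_bin H1 H2 Ha Hb => e.
  move: (H1 e) (H2 e); rewrite /= !simpE => h1 h2.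
  have := or_ok (qv s e) (qv s.+1 e) (qv (s.+1 + fsize a) e); rewrite h1 h2 => /esym/eqP ->.
  by rewrite (IHa _ Ha) (IHb _ Hb).
- move=> a IHa b IHb s; unpack_bin H1 H2 Ha Hb => e.
  move: (H1 e) (H2 e); rewrite /= !simpE => h1 h2.
  have := imp_ok (qv s e) (qv s.+1 e) (qv (s.+1 + fsize a) e); rewrite h1 h2 => /esym/eqP ->.
  by rewrite (IHa _ Ha) (IHb _ Hb).
- move=> a IHa b IHb s.
  move/tmodels_cons=> [H1 /tmodels_cons [H2 /tmodels_cons [H3 /tmodels_cat [Ha Hb]]]] e.
  move: (H1 e) (H2 e) (H3 e); rewrite /= !simpE => h1 h2 h3.
  have := equiv_ok (qv s e) (qv_le1 s.+1 e) (qv_le1 (s.+1 + fsize a) e).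
  rewrite h1 h2 h3 => /esym/eqP ->.
  by rewrite (IHa _ Ha) (IHb _ Hb).
- move=> a IHa b IHb s; unpack_bin H1 H2 Ha Hb => e.
  move: (H1 e) (H2 e); rewrite /= !simpE => h1 h2.
  have := eqc_ok (qv s e) (qv s.+1 e) (qv (s.+1 + fsize a) e); rewrite h1 h2 => /esym/eqP ->.
  by rewrite (IHa _ Ha) (IHb _ Hb).
- move=> a IHa b IHb s; unpack_bin H1 H2 Ha Hb => e.
  move: (H1 e) (H2 e); rewrite /= !simpE => h1 h2.
  have := prec_ok (qv s e) (qv s.+1 e) (qv (s.+1 + fsize a) e); rewrite h1 h2 => /esym/eqP ->.
  by rewrite (IHa _ Ha) (IHb _ Hb).
- move=> v a IHa s /tmodels_cons [H1 Ha] e.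
  move: (H1 e); rewrite /= !simpE orbF => /eqP -> /=.
  congr (inf _); apply/funext => r; apply/propext.
  by split=> -[u ->]; exists u; rewrite mapVar -(IHa _ Ha).
- move=> v a IHa s /tmodels_cons [H1 Ha] e.
  move: (H1 e); rewrite /= !simpE orbF => /eqP -> /=.
  congr (sup _); apply/funext => r; apply/propext.
  by split=> -[u ->]; exists u; rewrite mapVar -(IHa _ Ha).
Qed.


Fixpoint allC (phi : formula L) (s : nat) : Prop :=
  (forall e, qv s e = feval A phi e) /\
  match phi with
  | FAtom _ _ | FConst _ => True
  | FNeg a | FDelta a | FAll _ a | FEx _ a => allC a s.+1
  | FAnd a b | FOr a b | FImp a b | FEquiv a b | FEqc a b | FPrec a b =>
      allC a s.+1 /\ allC b (s.+1 + fsize a)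
  end.

Lemma allC_hd phi s : allC phi s -> forall e, qv s e = feval A phi e.
Proof.
move=> H e; case: phi H => [p ts|c|a|a|a b|a b|a b|a b|a b|a b|x a|x a] [H _]; exact: H.
Qed.

Lemma complete (phi : formula L) s : allC phi s -> tmodels A' (trans n V phi s).
Proof.
elim: phi s => /=.
- move=> p ts s [Hs _] C [<-|//] e /=; rewrite !simpE orbF (Hs e) /= Hexp.2.
  apply/eqP; congr (irel A p _); elim: ts {Hs} => //= t ts ->.
  by rewrite (teval_exp _ _ Hexp.1).
- by move=> c s [Hs _] C [<-|//] e /=; rewrite !simpE orbF (Hs e).
- move=> a IHa s [Hs Ca].
  apply/tmodels_cons; split; [|apply/tmodels_cons; split; [|exact: IHa]];
  move=> e; rewrite /= !simpE (allC_hd Ca e) (Hs e);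
  have := eqxx (feval A (FNeg a) e); rewrite /= -neg_ok => /andP[? ?] //.
- move=> a IHa s [Hs Ca].
  apply/tmodels_cons; split; [|apply/tmodels_cons; split; [|exact: IHa]];
  move=> e; rewrite /= !simpE (allC_hd Ca e) (Hs e);
  have := eqxx (feval A (FDelta a) e); rewrite /= -delta_ok => /andP[? ?] //.
- move=> a IHa b IHb s [Hs [Ca Cb]];
  apply/tmodels_cons; split; [|apply/tmodels_cons; split;
     [|apply/tmodels_cat; split; [exact: IHa | exact: IHb]]];
  move=> e; rewrite /= !simpE (allC_hd Ca e) (allC_hd Cb e) (Hs e);
  have := eqxx (feval A (FAnd a b) e); rewrite /= -and_ok => /andP[? ?] //.
- move=> a IHa b IHb s [Hs [Ca Cb]];
  apply/tmodels_cons; split; [|apply/tmodels_cons; split;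
     [|apply/tmodels_cat; split; [exact: IHa | exact: IHb]]];
  move=> e; rewrite /= !simpE (allC_hd Ca e) (allC_hd Cb e) (Hs e);
  have := eqxx (feval A (FOr a b) e); rewrite /= -or_ok => /andP[? ?] //.
- move=> a IHa b IHb s [Hs [Ca Cb]];
  apply/tmodels_cons; split; [|apply/tmodels_cons; split;
     [|apply/tmodels_cat; split; [exact: IHa | exact: IHb]]];
  move=> e; rewrite /= !simpE (allC_hd Ca e) (allC_hd Cb e) (Hs e);
  have := eqxx (feval A (FImp a b) e); rewrite /= -imp_ok => /andP[? ?] //.
- move=> a IHa b IHb s [Hs [Ca Cb]].
  have K : forall e, [&& (feval A (FEquiv a b) e == 1) || ((feval A a e < feval A b e) || ((feval A b e < feval A a e) || false)),
      (feval A (FEquiv a b) e == feval A a e) || ((feval A a e == feval A b e) || ((feval A b e < feval A a e) || false)) &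
      (feval A (FEquiv a b) e == feval A b e) || ((feval A a e == feval A b e) || ((feval A a e < feval A b e) || false))].
    move=> e; rewrite equiv_ok //; by rewrite -?(allC_hd Ca e) -?(allC_hd Cb e) qv_le1.
  apply/tmodels_cons; split; [|apply/tmodels_cons; split; [|apply/tmodels_cons; split;
     [|apply/tmodels_cat; split; [exact: IHa | exact: IHb]]]];
  move=> e; rewrite /= !simpE (allC_hd Ca e) (allC_hd Cb e) (Hs e); by case/and3P: (K e).
- move=> a IHa b IHb s [Hs [Ca Cb]];
  apply/tmodels_cons; split; [|apply/tmodels_cons; split;
     [|apply/tmodels_cat; split; [exact: IHa | exact: IHb]]];
  move=> e; rewrite /= !simpE (allC_hd Ca e) (allC_hd Cb e) (Hs e);
  have := eqxx (feval A (FEqc a b) e); rewrite /= -eqc_ok => /andP[? ?] //.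
- move=> a IHa b IHb s [Hs [Ca Cb]];
  apply/tmodels_cons; split; [|apply/tmodels_cons; split;
     [|apply/tmodels_cat; split; [exact: IHa | exact: IHb]]];
  move=> e; rewrite /= !simpE (allC_hd Ca e) (allC_hd Cb e) (Hs e);
  have := eqxx (feval A (FPrec a b) e); rewrite /= -prec_ok => /andP[? ?] //.
- move=> v a IHa s [Hs Ca]; apply/tmodels_cons; split; last exact: IHa.
  move=> e /=; rewrite !simpE orbF (Hs e) /=; apply/eqP.
  congr (inf _); apply/funext => r; apply/propext.
  by split=> -[u ->]; exists u; rewrite mapVar; have := allC_hd Ca (upd e v u); rewrite /qv => ->.
- move=> v a IHa s [Hs Ca]; apply/tmodels_cons; split; last exact: IHa.
  move=> e /=; rewrite !simpE orbF (Hs e) /=; apply/eqP.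
  congr (sup _); apply/funext => r; apply/propext.
  by split=> -[u ->]; exists u; rewrite mapVar; have := allC_hd Ca (upd e v u); rewrite /qv => ->.
Qed.

End Sound.

Section Build.
Variables (L : language) (U : Type) (A : interp L U) (u0 : U) (phi : formula L).
Hypothesis wphi : wf_formula phi.
Let n := fsize phi.
Let V := fvars phi.

Definition env (us : seq U) (v : nat) : U := nth u0 us (index v V).

Lemma env_map e v : v \in V -> env (map e V) v = e v.
Proof. by move=> vV; rewrite /env (nth_map v) ?index_mem // nth_index. Qed.

Fixpoint val (psi : formula L) (s i : nat) (us : seq U) : R :=
  if i == s then feval A psi (env us) else
  match psi with
  | FAtom _ _ | FConst _ => 0
  | FNeg a | FDelta a | FAll _ a | FEx _ a => val a s.+1 i us
  | FAnd a b | FOr a b | FImp a b | FEquiv a b | FEqc a b | FPrec a b =>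
      if (i < s.+1 + fsize a)%N then val a s.+1 i us else val b (s.+1 + fsize a) i us
  end.

Lemma val01 psi s i us : wf_formula psi -> 0 <= val psi s i us <= 1.
Proof.
elim: psi s => [p ts|c|a IHa|a IHa|a IHa b IHb|a IHa b IHb|a IHa b IHb|a IHa b IHb
  |a IHa b IHb|a IHa b IHb|x a IHa|x a IHa] s w; cbn [val]; case: ifP => _;
  try (by apply: feval01); rewrite ?ler01 ?lexx //; try (by apply: IHa);
  try (by case: w => wa wb; case: ifP => _; [apply: IHa|apply: IHb]).
Qed.

Definition irel' (p : (psym L + 'I_(size (Qs n V)))%type) (us : seq U) : R :=
  match p with inl p => irel A p us | inr i => val phi 0 i us end.

Lemma irel'_unit p us : 0 <= irel' p us <= 1.
Proof. case: p => [p|i] /=; [exact: irel_unit | exact: val01]. Qed.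

Definition A' : interp (LQ L n V) U := @Interp (LQ L n V) U (ifun A) irel' irel'_unit.

Lemma A'_exp : expansion A A'.
Proof. by []. Qed.

Lemma pidxK i : (i <= n)%N -> nat_of_ord (pidx n V i) = i.
Proof. move=> h; rewrite /pidx. rewrite (@inordK (size (nseq n (size V)))) //. by rewrite size_nseq ltnS. Qed.

Lemma build_head psi s :
  (forall i us, (s <= i < s + fsize psi)%N -> val phi 0 i us = val psi s i us) ->
  {subset fvars psi <= V} -> (s + fsize psi <= n.+1)%N ->
  forall e, qv A' s e = feval A psi e.
Proof.
move=> Hag Hsub Hs e; have hp := fsize_gt0 psi.
rewrite /qv /= pidxK; last by lia.
rewrite Hag; last by lia.
case: psi {Hag Hsub Hs hp} (Hsub) => [p ts|c|a|a|a b|a b|a b|a b|a b|a b|x a|x a] Hsub;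
  cbn [val]; rewrite eqxx; apply: feval_agree => v vi; apply: env_map; apply: Hsub; exact: vi.
Qed.


Lemma build_allC psi s :
  (forall i us, (s <= i < s + fsize psi)%N -> val phi 0 i us = val psi s i us) ->
  {subset fvars psi <= V} -> (s + fsize psi <= n.+1)%N -> allC A A' psi s.
Proof.
elim: psi s.
- by move=> p ts s Hag Hsub Hs; split; first exact: build_head.
- by move=> c s Hag Hsub Hs; split; first exact: build_head.
- move=> a IHa s Hag Hsub Hs; split; first exact: build_head.
  apply: IHa.
  + move=> i us h; rewrite Hag /=; last by lia.
    by rewrite (_ : (i == s) = false) //; apply/eqP; lia.
  + by move=> v vi; apply: Hsub; rewrite /= ?inE vi ?orbT.
  + by move: Hs => /=; lia.
- move=> a IHa s Hag Hsub Hs; split; first exact: build_head.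
  apply: IHa.
  + move=> i us h; rewrite Hag /=; last by lia.
    by rewrite (_ : (i == s) = false) //; apply/eqP; lia.
  + by move=> v vi; apply: Hsub; rewrite /= ?inE vi ?orbT.
  + by move: Hs => /=; lia.
- move=> a IHa b IHb s Hag Hsub Hs; split; first exact: build_head.
  split; [apply: IHa|apply: IHb].
  + move=> i us h; rewrite Hag /=; last by lia.
    rewrite (_ : (i == s) = false); last by apply/eqP; lia.
    by rewrite (_ : (i < s.+1 + fsize a)%N = true) //; lia.
  + by move=> v vi; apply: Hsub; rewrite /= mem_cat vi.
  + by move: Hs => /=; lia.
  + move=> i us h; rewrite Hag /=; last by lia.
    rewrite (_ : (i == s) = false); last by apply/eqP; lia.
    by rewrite (_ : (i < s.+1 + fsize a)%N = false) //; lia.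
  + by move=> v vi; apply: Hsub; rewrite /= mem_cat vi orbT.
  + by move: Hs => /=; lia.
- move=> a IHa b IHb s Hag Hsub Hs; split; first exact: build_head.
  split; [apply: IHa|apply: IHb].
  + move=> i us h; rewrite Hag /=; last by lia.
    rewrite (_ : (i == s) = false); last by apply/eqP; lia.
    by rewrite (_ : (i < s.+1 + fsize a)%N = true) //; lia.
  + by move=> v vi; apply: Hsub; rewrite /= mem_cat vi.
  + by move: Hs => /=; lia.
  + move=> i us h; rewrite Hag /=; last by lia.
    rewrite (_ : (i == s) = false); last by apply/eqP; lia.
    by rewrite (_ : (i < s.+1 + fsize a)%N = false) //; lia.
  + by move=> v vi; apply: Hsub; rewrite /= mem_cat vi orbT.
  + by move: Hs => /=; lia.
- move=> a IHa b IHb s Hag Hsub Hs; split; first exact: build_head.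
  split; [apply: IHa|apply: IHb].
  + move=> i us h; rewrite Hag /=; last by lia.
    rewrite (_ : (i == s) = false); last by apply/eqP; lia.
    by rewrite (_ : (i < s.+1 + fsize a)%N = true) //; lia.
  + by move=> v vi; apply: Hsub; rewrite /= mem_cat vi.
  + by move: Hs => /=; lia.
  + move=> i us h; rewrite Hag /=; last by lia.
    rewrite (_ : (i == s) = false); last by apply/eqP; lia.
    by rewrite (_ : (i < s.+1 + fsize a)%N = false) //; lia.
  + by move=> v vi; apply: Hsub; rewrite /= mem_cat vi orbT.
  + by move: Hs => /=; lia.
- move=> a IHa b IHb s Hag Hsub Hs; split; first exact: build_head.
  split; [apply: IHa|apply: IHb].
  + move=> i us h; rewrite Hag /=; last by lia.
    rewrite (_ : (i == s) = false); last by apply/eqP; lia.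
    by rewrite (_ : (i < s.+1 + fsize a)%N = true) //; lia.
  + by move=> v vi; apply: Hsub; rewrite /= mem_cat vi.
  + by move: Hs => /=; lia.
  + move=> i us h; rewrite Hag /=; last by lia.
    rewrite (_ : (i == s) = false); last by apply/eqP; lia.
    by rewrite (_ : (i < s.+1 + fsize a)%N = false) //; lia.
  + by move=> v vi; apply: Hsub; rewrite /= mem_cat vi orbT.
  + by move: Hs => /=; lia.
- move=> a IHa b IHb s Hag Hsub Hs; split; first exact: build_head.
  split; [apply: IHa|apply: IHb].
  + move=> i us h; rewrite Hag /=; last by lia.
    rewrite (_ : (i == s) = false); last by apply/eqP; lia.
    by rewrite (_ : (i < s.+1 + fsize a)%N = true) //; lia.
  + by move=> v vi; apply: Hsub; rewrite /= mem_cat vi.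
  + by move: Hs => /=; lia.
  + move=> i us h; rewrite Hag /=; last by lia.
    rewrite (_ : (i == s) = false); last by apply/eqP; lia.
    by rewrite (_ : (i < s.+1 + fsize a)%N = false) //; lia.
  + by move=> v vi; apply: Hsub; rewrite /= mem_cat vi orbT.
  + by move: Hs => /=; lia.
- move=> a IHa b IHb s Hag Hsub Hs; split; first exact: build_head.
  split; [apply: IHa|apply: IHb].
  + move=> i us h; rewrite Hag /=; last by lia.
    rewrite (_ : (i == s) = false); last by apply/eqP; lia.
    by rewrite (_ : (i < s.+1 + fsize a)%N = true) //; lia.
  + by move=> v vi; apply: Hsub; rewrite /= mem_cat vi.
  + by move: Hs => /=; lia.
  + move=> i us h; rewrite Hag /=; last by lia.
    rewrite (_ : (i == s) = false); last by apply/eqP; lia.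
    by rewrite (_ : (i < s.+1 + fsize a)%N = false) //; lia.
  + by move=> v vi; apply: Hsub; rewrite /= mem_cat vi orbT.
  + by move: Hs => /=; lia.
- move=> x a IHa s Hag Hsub Hs; split; first exact: build_head.
  apply: IHa.
  + move=> i us h; rewrite Hag /=; last by lia.
    by rewrite (_ : (i == s) = false) //; apply/eqP; lia.
  + by move=> v vi; apply: Hsub; rewrite /= ?inE vi ?orbT.
  + by move: Hs => /=; lia.
- move=> x a IHa s Hag Hsub Hs; split; first exact: build_head.
  apply: IHa.
  + move=> i us h; rewrite Hag /=; last by lia.
    by rewrite (_ : (i == s) = false) //; apply/eqP; lia.
  + by move=> v vi; apply: Hsub; rewrite /= ?inE vi ?orbT.
  + by move: Hs => /=; lia.
Qed.

End Build.

Arguments Qa : simpl never.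

Lemma wf_term_ext (L : language) (Q : seq nat) (t : term (fsym L)) :
  @wf_term (ext L Q) t = @wf_term L t.
Proof.
elim/term_ind2: t => //= f ts H; congr andb; elim: H => //= t ts' -> _ ->; by [].
Qed.

Section Props.
Variables (L : language) (n : nat) (V : seq nat).

Lemma oesize_Qa i : oesize (Qa L n V i) = (size V).+1.
Proof.
rewrite /Qa /=; suff -> : sumn [seq tsize i | i <- [seq Var i | i <- V]] = size V by lia.
elim: V => //= v s IH T; rewrite IH; lia.
Qed.
Lemma oeconsts_Qa i : oeconsts (Qa L n V i) = [::].
Proof. by []. Qed.

Lemma pidx_lt i : (nat_of_ord (pidx n V i) < n.+1)%N.
Proof. by apply: leq_trans (ltn_ord _) _; rewrite /Qs size_nseq. Qed.

Lemma wf_Qa i : wf_oexpr (Qa L n V i).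
Proof.
rewrite /Qa /=; split.
  by by rewrite size_map /Qs nth_nseq pidx_lt.
by rewrite all_map; apply/allP.
Qed.

Lemma wf_QQ b v i : v \in V -> wf_oexpr (@OQAtom (LQ L n V) b v (inr (pidx n V i)) (map Var V)).
Proof.
move=> vV; rewrite /=; split.
- by by rewrite size_map /Qs nth_nseq pidx_lt.
- by rewrite all_map; apply/allP.
- by rewrite has_map; apply/hasP; exists v => //=.
- by rewrite all_map; apply/allP => y _ /=; case: (y == v).
Qed.

Lemma wf_c0 : wf_oexpr (c0 L n V). Proof. exact: tc0. Qed.
Lemma wf_c1 : wf_oexpr (c1 L n V). Proof. exact: tc1. Qed.

Lemma wf_ot_cons (C : oclause (LQ L n V)) S :
  List.Forall (@wf_olit _) C -> wf_otheory S -> wf_otheory (C :: S).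
Proof.
move=> HC HS C' /= [E|H]; last exact: HS.
subst C'; move=> l Hl; exact: (proj1 (List.Forall_forall _ _) HC l Hl).
Qed.

Lemma wf_ot_cat (S1 S2 : otheory (LQ L n V)) :
  wf_otheory S1 -> wf_otheory S2 -> wf_otheory (S1 ++ S2).
Proof. by move=> H1 H2 C HC; case: (List.in_app_or _ _ _ HC); [apply: H1|apply: H2]. Qed.

Lemma wf_ot_nil : wf_otheory ([::] : otheory (LQ L n V)).
Proof. by []. Qed.

Ltac wfcl := repeat first [ apply: List.Forall_nil | apply: List.Forall_cons
  | apply: wf_Qa | apply: wf_c0 | apply: wf_c1 | match goal with |- wf_olit _ => split end ].

Lemma wf_trans (psi : formula L) s : wf_formula psi -> {subset fvars psi <= V} ->
  wf_otheory (trans n V psi s).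
Proof.
elim: psi s => /=.
- move=> p ts s w _; apply: wf_ot_cons => //; wfcl; rewrite /=; split; first exact w.1.
  by rewrite (eq_all (@wf_term_ext L (Qs n V))); case: w.
- move=> c s w _; apply: wf_ot_cons => //; wfcl; exact w.
- move=> a IHa s w Hs; apply: wf_ot_cons; last apply: wf_ot_cons; wfcl; exact: IHa.
- move=> a IHa s w Hs; apply: wf_ot_cons; last apply: wf_ot_cons; wfcl; exact: IHa.
- move=> a IHa b IHb s [wa wb] Hs; apply: wf_ot_cons; last apply: wf_ot_cons; wfcl;
  apply: wf_ot_cat; [apply: IHa|apply: IHb] => // v vi; apply: Hs; by rewrite mem_cat vi ?orbT.
- move=> a IHa b IHb s [wa wb] Hs; apply: wf_ot_cons; last apply: wf_ot_cons; wfcl;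
  apply: wf_ot_cat; [apply: IHa|apply: IHb] => // v vi; apply: Hs; by rewrite mem_cat vi ?orbT.
- move=> a IHa b IHb s [wa wb] Hs; apply: wf_ot_cons; last apply: wf_ot_cons; wfcl;
  apply: wf_ot_cat; [apply: IHa|apply: IHb] => // v vi; apply: Hs; by rewrite mem_cat vi ?orbT.
- move=> a IHa b IHb s [wa wb] Hs; apply: wf_ot_cons; last (apply: wf_ot_cons; last apply: wf_ot_cons); wfcl;
  apply: wf_ot_cat; [apply: IHa|apply: IHb] => // v vi; apply: Hs; by rewrite mem_cat vi ?orbT.
- move=> a IHa b IHb s [wa wb] Hs; apply: wf_ot_cons; last apply: wf_ot_cons; wfcl;
  apply: wf_ot_cat; [apply: IHa|apply: IHb] => // v vi; apply: Hs; by rewrite mem_cat vi ?orbT.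
- move=> a IHa b IHb s [wa wb] Hs; apply: wf_ot_cons; last apply: wf_ot_cons; wfcl;
  apply: wf_ot_cat; [apply: IHa|apply: IHb] => // v vi; apply: Hs; by rewrite mem_cat vi ?orbT.
- move=> x a IHa s w Hs; apply: wf_ot_cons.
    wfcl; apply: wf_QQ; apply: Hs; exact: mem_head.
  by apply: IHa => // v vi; apply: Hs; rewrite inE vi orbT.
- move=> x a IHa s w Hs; apply: wf_ot_cons.
    wfcl; apply: wf_QQ; apply: Hs; exact: mem_head.
  by apply: IHa => // v vi; apply: Hs; rewrite inE vi orbT.
Qed.


Lemma otsize_cons (C : oclause (LQ L n V)) S : otsize (C :: S) = (ocsize C + otsize S)%N.
Proof. by []. Qed.
Lemma otsize_cat (S1 S2 : otheory (LQ L n V)) : otsize (S1 ++ S2) = (otsize S1 + otsize S2)%N.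
Proof. by rewrite /otsize map_cat sumn_cat. Qed.
Lemma sumnVar (F : Type) : sumn [seq @tsize F i | i <- [seq Var i | i <- V]] = size V.
Proof. elim: V => //= v s IH; rewrite IH; lia. Qed.

Lemma trans_size (psi : formula L) s :
  (otsize (trans n V psi s) <= 27 * (size V + 3 + fsize psi) * fsize psi)%N.
Proof.
elim: psi s => /=.
- move=> p ts s; rewrite /otsize /ocsize /olsize /= ?sumnVar; nia.
- move=> c s; rewrite /otsize /ocsize /olsize /= ?sumnVar; nia.
- move=> a IHa s; rewrite !otsize_cons /ocsize /olsize /= ?sumnVar; have := IHa s.+1; nia.
- move=> a IHa s; rewrite !otsize_cons /ocsize /olsize /= ?sumnVar; have := IHa s.+1; nia.
- move=> a IHa b IHb s; rewrite !otsize_cons otsize_cat /ocsize /olsize /= ?sumnVar;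
  have := IHa s.+1; have := IHb (s.+1 + fsize a)%N; nia.
- move=> a IHa b IHb s; rewrite !otsize_cons otsize_cat /ocsize /olsize /= ?sumnVar;
  have := IHa s.+1; have := IHb (s.+1 + fsize a)%N; nia.
- move=> a IHa b IHb s; rewrite !otsize_cons otsize_cat /ocsize /olsize /= ?sumnVar;
  have := IHa s.+1; have := IHb (s.+1 + fsize a)%N; nia.
- move=> a IHa b IHb s; rewrite !otsize_cons otsize_cat /ocsize /olsize /= ?sumnVar;
  have := IHa s.+1; have := IHb (s.+1 + fsize a)%N; nia.
- move=> a IHa b IHb s; rewrite !otsize_cons otsize_cat /ocsize /olsize /= ?sumnVar;
  have := IHa s.+1; have := IHb (s.+1 + fsize a)%N; nia.
- move=> a IHa b IHb s; rewrite !otsize_cons otsize_cat /ocsize /olsize /= ?sumnVar;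
  have := IHa s.+1; have := IHb (s.+1 + fsize a)%N; nia.
- move=> x a IHa s; rewrite !otsize_cons /ocsize /olsize /= ?sumnVar; have := IHa s.+1; nia.
- move=> x a IHa s; rewrite !otsize_cons /ocsize /olsize /= ?sumnVar; have := IHa s.+1; nia.
Qed.


Definition okc (cs : seq R) (r : R) : bool := (r == 0) || (r == 1) || (r \in cs).

Lemma otconsts_cons (C : oclause (LQ L n V)) S :
  otconsts (C :: S) = flatten (map (@olconsts _) C) ++ otconsts S.
Proof. by []. Qed.
Lemma otconsts_cat (S1 S2 : otheory (LQ L n V)) :
  otconsts (S1 ++ S2) = otconsts S1 ++ otconsts S2.
Proof. by rewrite /otconsts map_cat flatten_cat. Qed.

Lemma okc_catl a b : subpred (okc a) (okc (a ++ b)).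
Proof. by move=> r; rewrite /okc mem_cat; case: (r == 0); case: (r == 1); case: (r \in a). Qed.
Lemma okc_catr a b : subpred (okc b) (okc (a ++ b)).
Proof. by move=> r; rewrite /okc mem_cat; case: (r == 0); case: (r == 1); case: (r \in a). Qed.

Lemma trans_consts (psi : formula L) s : all (okc (fconsts psi)) (otconsts (trans n V psi s)).
Proof.
elim: psi s => [p ts|c|a IHa|a IHa|a IHa b IHb|a IHa b IHb|a IHa b IHb|a IHa b IHb
  |a IHa b IHb|a IHa b IHb|x a IHa|x a IHa] s;
  rewrite /trans -/trans ?otconsts_cons ?otconsts_cat ?all_cat /= /okc ?eqxx ?orbT /= -?/(okc _);
  try (by rewrite ?inE ?eqxx ?orbT);
  try (by apply: IHa);
  try (by rewrite (sub_all (@okc_catl _ _) (IHa _)) (sub_all (@okc_catr _ _) (IHb _))).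
Qed.

Lemma trans_first (psi : formula L) s C : List.In C (trans n V psi s) ->
  exists l rest i, C = l :: rest /\ ollhs l = Qa L n V i.
Proof.
elim: psi s C => /=.
- by move=> p ts s C [<-|//]; eexists; eexists; exists s.
- by move=> c s C [<-|//]; eexists; eexists; exists s.
- move=> a IHa s C [<-|[<-|]]; try (by eexists; eexists; exists s); exact: IHa.
- move=> a IHa s C [<-|[<-|]]; try (by eexists; eexists; exists s); exact: IHa.
- move=> a IHa b IHb s C [<-|[<-|H]]; try (by eexists; eexists; exists s);
  case: (List.in_app_or _ _ _ H); [exact: IHa|exact: IHb].
- move=> a IHa b IHb s C [<-|[<-|H]]; try (by eexists; eexists; exists s);
  case: (List.in_app_or _ _ _ H); [exact: IHa|exact: IHb].
- move=> a IHa b IHb s C [<-|[<-|H]]; try (by eexists; eexists; exists s);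
  case: (List.in_app_or _ _ _ H); [exact: IHa|exact: IHb].
- move=> a IHa b IHb s C [<-|[<-|[<-|H]]]; try (by eexists; eexists; exists s);
  case: (List.in_app_or _ _ _ H); [exact: IHa|exact: IHb].
- move=> a IHa b IHb s C [<-|[<-|H]]; try (by eexists; eexists; exists s);
  case: (List.in_app_or _ _ _ H); [exact: IHa|exact: IHb].
- move=> a IHa b IHb s C [<-|[<-|H]]; try (by eexists; eexists; exists s);
  case: (List.in_app_or _ _ _ H); [exact: IHa|exact: IHb].
- move=> x a IHa s C [<-|]; try (by eexists; eexists; exists s); exact: IHa.
- move=> x a IHa s C [<-|]; try (by eexists; eexists; exists s); exact: IHa.
Qed.

End Props.

Lemma all_In (T : Type) (P : pred T) (S : seq T) :
  (forall C, List.In C S -> P C) -> all P S.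
Proof. by elim: S => //= x S IH H; rewrite H ?IH //; [move=> C HC; apply: H; right | left]. Qed.

Local Close Scope ring_scope.
Local Close Scope classical_set_scope.

Theorem lemma3 :
  exists c : nat, forall (L : language) (phi : formula L), wf_formula phi ->
  exists (Q : seq nat) (S : otheory (ext L Q)),
    wf_otheory S /\
    (* (a) *) (size Q <= 2 * fsize phi)%N /\
    (* (b) *) ((Q = [::] /\ S = [:: [::]]) \/ (Q = [::] /\ S = [::]) \/
               (Q <> [::] /\ all (fun C => size C != 0%N) S /\ S <> [::])) /\
    (* (c) *) (forall (U : Type), U -> forall A : interp L U,
                 fmodels A phi <->
                 exists A' : interp (ext L Q) U, expansion A A' /\ tmodels A' S) /\
    (* (d) *) (otsize S <= c * (fsize phi) ^ 2)%N /\
    (* (e) *) ((S <> [::] /\ S <> [:: [::]]) ->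
                 Q <> [::] /\ forall C, List.In C S -> has_new_pred C) /\
    (* (f) *) (forall r, r \in otconsts S -> r != 0%R -> r != 1%R -> r \in fconsts phi).
Proof.
exists 140 => L phi w.
have hp := fsize_gt0 phi.
have hV := fvars_size phi.
exists (Qs (fsize phi) (fvars phi)), (theory (fsize phi) (fvars phi) phi).
split.
  apply: wf_ot_cons; last exact: wf_trans.
  by repeat first [ apply: List.Forall_nil | apply: List.Forall_cons
    | apply: wf_Qa | apply: wf_c1 | match goal with |- wf_olit _ => split end ].
split.
  by rewrite /Qs size_nseq; lia.
split.
  right; right; split=> //; split=> //=.
  apply: all_In => C /trans_first [l [rest [i [-> _]]]]; by [].
split.
  move=> U u0 A; split.
  - move=> H; exists (A' A u0 w); split; first exact: A'_exp.
    have HC : allC A (A' A u0 w) phi 0.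
      by apply: build_allC => //; lia.
    apply/tmodels_cons; split; last by apply: complete; [exact: A'_exp | exact: HC].
    move=> e /=; rewrite holds_eqc oeval_Qa oeval_c1 (allC_hd HC e) H; by rewrite eqxx.
  - move=> [A'' [Hx HT]] e; move/tmodels_cons: HT => [Hr Ht].
    rewrite -(sound Hx Ht e); move: (Hr e) => /=; rewrite holds_eqc oeval_Qa oeval_c1 orbF.
    by move/eqP.
split.
  rewrite /theory otsize_cons; have := trans_size (fsize phi) (fvars phi) phi 0.
  rewrite /ocsize /olsize /= sumnVar; nia.
split.
  move=> _; split=> // C /= [<-|/trans_first [l [rest [i [-> Hl]]]]].
    by exists (eqc (Qa L (fsize phi) (fvars phi) 0) (c1 L (fsize phi) (fvars phi))); split;
      [left | left; exists (pidx (fsize phi) (fvars phi) 0)].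
  by exists l; split; [left | left; exists (pidx (fsize phi) (fvars phi) i); rewrite Hl].
move=> r; rewrite /theory otconsts_cons /= inE => /orP [/eqP -> _ /negP []// |].
move=> Hr h0 h1; have := allP (trans_consts (fsize phi) (fvars phi) phi 0) r Hr.
by rewrite /okc (negbTE h0) (negbTE h1).
Qed.
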